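(* For every integer $k$, there exists a strongly connected digraph $D$ with $\chi(D)>k$ that contains no $3$-spindle and no $(2+2)$-bispindle (as a subdigraph).
   Context: Digraphs are finite, without loops or parallel arcs (two opposite arcs $uv$, $vu$ are allowed). The chromatic number $\chi(D)$ of a digraph $D$ is the chromatic number of its underlying undirected graph. A digraph is strongly connected if for any two vertices $x,y$ there is a directed path from $x$ to $y$. For distinct vertices $x,y$, a $p$-spindle with tail $x$ and head $y$ is a union of $p$ pairwise internally vertex-disjoint directed paths from $x$ to $y$. A $(p+q)$-bispindle is the union of $p$ directed $(x,y)$-paths and $q$ directed $(y,x)$-paths for some distinct vertices $x,y$, all these $p+q$ directed paths being pairwise internally vertex-disjoint. *)

(* Defs.v *)
From mathcomp Require Import all_boot.
Set Implicit Arguments. Unset Strict Implicit. Unset Printing Implicit Defensive.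

(* Loops are excluded by requiring
   A to be irreflexive; a relation cannot have parallel arcs, while the two
   opposite arcs uv, vu are allowed. *)
Definition loopless (V : finType) (A : rel V) : Prop := irreflexive A.

Definition strongly_connected (V : finType) (A : rel V) : Prop :=
  forall x y : V, connect A x y.

Definition k_colorable (V : finType) (A : rel V) (k : nat) : Prop :=
  exists c : V -> 'I_k, forall u v : V, A u v -> c u != c v.

Definition chi_gt (V : finType) (A : rel V) (k : nat) : Prop :=
  ~ k_colorable A k.

Definition dipath (V : finType) (A : rel V) (x y : V) (p : seq V) : bool :=
  path A x (rcons p y) && uniq (x :: rcons p y).

Definition int_disjoint (V : finType) (p1 p2 : seq V) : bool :=
  [disjoint p1 & p2].

Definition has_spindle (V : finType) (A : rel V) (p : nat) : Prop :=
  exists (x y : V) (P : seq (seq V)),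
    [/\ x != y, size P = p, all (dipath A x y) P, uniq P
      & pairwise (@int_disjoint V) P].

Definition has_bispindle (V : finType) (A : rel V) (p q : nat) : Prop :=
  exists (x y : V) (P Q : seq (seq V)),
    [/\ x != y, size P = p & size Q = q] /\
    [/\ all (dipath A x y) P, all (dipath A y x) Q, uniq P & uniq Q] /\
    [/\ pairwise (@int_disjoint V) P, pairwise (@int_disjoint V) Q
       & allrel (@int_disjoint V) P Q].

(* Main.v *)
Require Import Defs.
From mathcomp Require Import all_boot.
From mathcomp Require Import zify.
Set Implicit Arguments. Unset Strict Implicit. Unset Printing Implicit Defensive.

Lemma pw_in (X : eqType) (r : rel X) s p q :
  pairwise r s -> p \in s -> q \in s -> p != q -> r p q || r q p.
Proof.
elim: s => //= a s IH /andP[ha hs]; rewrite !inE.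
case/predU1P=> [->|ps]; case/predU1P=> [->|qs]; rewrite ?eqxx //.
- by move=> _; rewrite (allP ha).
- by move=> _; rewrite (allP ha) ?orbT.
- exact: IH.
Qed.

Lemma count_le1 (X : eqType) (P : pred X) s :
  uniq s -> (forall p q, p \in s -> q \in s -> P p -> P q -> p = q) ->
  count P s <= 1.
Proof.
elim: s => //= a s IH /andP[ha hs] H.
case Pa: (P a) => /=.
  rewrite -[X in _ <= X]addn0 leq_add2l leqn0 -(negbK (_ == 0)) -lt0n -has_count.
  apply/hasP=> -[q qs Pq]; have := H a q; rewrite inE eqxx inE qs orbT => /(_ isT isT Pa Pq).
  by move=> eaq; move: ha; rewrite eaq qs.
by rewrite add0n; apply: IH => // p q ps qs; apply: H; rewrite inE ?ps ?qs orbT.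
Qed.

Lemma uniq_size2 (X : eqType) (s : seq X) :
  uniq s -> (forall a b c, a \in s -> b \in s -> c \in s -> [|| a == b, a == c | b == c]) ->
  size s <= 2.
Proof.
case: s => [|a [|b [|c s]]] //= /and4P[]; rewrite !inE !negb_or => /and3P[hab hac _] /andP[hbc _] _ _ H.
have := H a b c; rewrite !inE !eqxx !orbT /= => /(_ isT isT isT).
by rewrite (negbTE hab) (negbTE hac) (negbTE hbc).
Qed.

Section Fam.
Variables (V : finType) (A : rel V).

Lemma dip_head x y p : dipath A x y p -> A x (head y p).
Proof. by case: p => [|z p] /andP[] /= => [/andP[]|/andP[]]. Qed.

Lemma dip_last x y p : dipath A x y p -> A (last x p) y.
Proof. by case/andP; rewrite rcons_path => /andP[]. Qed.

Lemma dip_ynotin x y p : dipath A x y p -> y \notin p.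
Proof. by case/andP=> _ /= /andP[_]; rewrite rcons_uniq => /andP[]. Qed.

Lemma dip_xnotin x y p : dipath A x y p -> x \notin p.
Proof. by case/andP=> _ /= /andP[]; rewrite mem_rcons inE negb_or => /andP[]. Qed.

Definition fam x y (P : seq (seq V)) :=
  [/\ all (dipath A x y) P, uniq P & pairwise (@int_disjoint V) P].

Lemma fam_disj x y P p q : fam x y P -> p \in P -> q \in P -> p != q ->
  [disjoint p & q].
Proof.
case=> _ _ pw pP qP npq; case/orP: (pw_in pw pP qP npq) => //.
by rewrite /int_disjoint disjoint_sym.
Qed.

Lemma fam_head_inj x y P : fam x y P -> {in P &, injective (head y)}.
Proof.
move=> F p q pP qP; have [//|npq] := eqVneq p q.
have dj := fam_disj F pP qP npq; case: F => /allP al _ _.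
have dp := al p pP; have dq := al q qP.
case: p q {npq pP qP} dj dp dq => [|a p] [|b q] //= dj dp dq.
- by move=> eyb; move: (dip_ynotin dq); rewrite eyb inE eqxx.
- by move=> eay; move: (dip_ynotin dp); rewrite -eay inE eqxx.
- by move=> eab; move: (disjointFr dj (mem_head a p)); rewrite eab inE eqxx.
Qed.

Lemma fam_last_inj x y P : fam x y P -> {in P &, injective (last x)}.
Proof.
move=> F p q pP qP; have [//|npq] := eqVneq p q.
have dj := fam_disj F pP qP npq; case: F => /allP al _ _.
have dp := al p pP; have dq := al q qP.
case: (lastP p) dj dp => [|p' a]; case: (lastP q) dq => [|q' b] //= dq dj dp.
- by rewrite last_rcons => exb; move: (dip_xnotin dq); rewrite exb mem_rcons inE eqxx.
- by rewrite last_rcons => eax; move: (dip_xnotin dp); rewrite -eax mem_rcons inE eqxx.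
- rewrite !last_rcons => eab; move: (disjointFr dj (x := b)).
  by rewrite !mem_rcons !inE eab eqxx => /(_ isT).
Qed.

Lemma fam_out2 x y P : fam x y P ->
  (forall a b c, A x a -> A x b -> A x c -> [|| a == b, a == c | b == c]) ->
  size P <= 2.
Proof.
move=> F H; rewrite -(size_map (head y)); apply: uniq_size2.
  by rewrite map_inj_in_uniq; [by case: F| exact: fam_head_inj F].
case: F => /allP al _ _ a b c /mapP[p pP ->] /mapP[q qP ->] /mapP[r rP ->].
by apply: H; apply: dip_head; apply: al.
Qed.

Lemma fam_in2 x y P : fam x y P ->
  (forall a b c, A a y -> A b y -> A c y -> [|| a == b, a == c | b == c]) ->
  size P <= 2.
Proof.
move=> F H; rewrite -(size_map (last x)); apply: uniq_size2.
  by rewrite map_inj_in_uniq; [by case: F| exact: fam_last_inj F].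
case: F => /allP al _ _ a b c /mapP[p pP ->] /mapP[q qP ->] /mapP[r rP ->].
by apply: H; apply: dip_last; apply: al.
Qed.

Lemma fam_out1 x y P : fam x y P ->
  (forall a b, A x a -> A x b -> a = b) -> size P <= 1.
Proof.
move=> F H; rewrite -(size_map (head y)).
have: uniq (map (head y) P) by rewrite map_inj_in_uniq; [by case: F| exact: fam_head_inj F].
have: {subset map (head y) P <= [pred a | A x a]}.
  by case: F => /allP al _ _ a /mapP[p pP ->]; apply: dip_head; apply: al.
case: (map _ _) => [|a [|b s]] //= sub /andP[]; rewrite inE negb_or => /andP[nab _] _.
by move: nab; rewrite (H a b) ?eqxx //; apply: sub; rewrite !inE eqxx ?orbT.
Qed.

Lemma fam_in1 x y P : fam x y P ->
  (forall a b, A a y -> A b y -> a = b) -> size P <= 1.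
Proof.
move=> F H; rewrite -(size_map (last x)).
have: uniq (map (last x) P) by rewrite map_inj_in_uniq; [by case: F| exact: fam_last_inj F].
have: {subset map (last x) P <= [pred a | A a y]}.
  by case: F => /allP al _ _ a /mapP[p pP ->]; apply: dip_last; apply: al.
case: (map _ _) => [|a [|b s]] //= sub /andP[]; rewrite inE negb_or => /andP[nab _] _.
by move: nab; rewrite (H a b) ?eqxx //; apply: sub; rewrite !inE eqxx ?orbT.
Qed.

End Fam.

Definition upath (V : finType) (A : rel V) :=
  forall x y p q, dipath A x y p -> dipath A x y q -> p = q.

Section Tutte.
Variables (k : nat) (V : finType) (A : rel V).
Local Notation n := #|V|.
Local Notation N := (k.+1 * #|V|).
Local Notation S := 'I_N.+1.

Definition TV := (S + ({set S} * V))%type.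

Definition mT (T : {set S}) (u : V) : S := nth ord0 (enum T) (enum_rank u).

Definition TA (x y : TV) : bool :=
  match x, y with
  | inr (T, u), inr (T', v) => (T == T') && A u v
  | inr (T, u), inl s => (n <= #|T|) && (s == mT T u)
  | _, _ => false
  end.

Definition emb (T : {set S}) (v : V) : TV := inr (T, v).

Lemma emb_inj T : injective (emb T).
Proof. by move=> u v []. Qed.

Lemma mT_in (T : {set S}) u : n <= #|T| -> mT T u \in T.
Proof.
move=> hn; rewrite /mT -mem_enum; apply: mem_nth.
by rewrite -cardE; apply: leq_trans hn.
Qed.

Lemma mT_inj (T : {set S}) u v : n <= #|T| -> mT T u = mT T v -> u = v.
Proof.
move=> hn /eqP; rewrite /mT nth_uniq ?enum_uniq -?cardE //;
  try by apply: leq_trans hn.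
by move/eqP/val_inj/enum_rank_inj.
Qed.

Lemma TK (T : {set S}) u l : path TA (inr (T, u)) l -> exists l0, path A u l0 /\
  (l = map (emb T) l0 \/
   (n <= #|T| /\ l = rcons (map (emb T) l0) (inl (mT T (last u l0))))).
Proof.
elim: l u => [|z l IH] u /=; first by move=> _; exists [::]; split=> //; left.
case: z => [s|[T' v]] /=.
  case/andP=> /andP[hn /eqP->]; case: l {IH} => [|z l] //= _.
  by exists [::]; split=> //; right.
case/andP=> /andP[/eqP<- huv] /IH [l0 [pl0 H]].
exists (v :: l0); split; first by rewrite /= huv.
by case: H => [->|[hn ->]]; [left | right].
Qed.

Lemma TA_upath : upath A -> upath TA.
Proof.
move=> U x y p q; case: x => [s|[T u]].
  by case: p => [|z p] /andP[] /=; [case: y | case: z].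
case/andP=> pp up /andP[pq uq].
have [l0 [pl0 Hp]] := TK pp; have [l1 [pl1 Hq]] := TK pq; clear pp pq.
case: Hp => [Ep|[hn Ep]].
- case: (lastP l0) Ep pl0 => [|l0' w]; first by move=> /(congr1 size); rewrite size_rcons.
  rewrite map_rcons => /rcons_inj [Ep Ey] pl0; subst p y.
  case: Hq => [Eq|[_ Eq]]; last first.
    by move/rcons_inj: Eq => [].
  case: (lastP l1) Eq pl1 => [|l1' w']; first by move=> /(congr1 size); rewrite size_rcons.
  rewrite map_rcons => /rcons_inj [Eq [Ew]] pl1; subst q w'.
  congr map; apply: (U u w).
    by rewrite /dipath pl0 -(map_inj_uniq (@emb_inj T)) /= map_rcons.
  by rewrite /dipath pl1 -(map_inj_uniq (@emb_inj T)) /= map_rcons.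
- move: Ep => /rcons_inj [Ep Ey]; subst p y.
  case: Hq => [Eq|[_ Eq]].
    by case: (lastP l1) Eq => [|l1' w']; [move=> /(congr1 size); rewrite size_rcons | rewrite map_rcons => /rcons_inj []].
  move: Eq => /rcons_inj [Eq /mT_inj]; move=> /(_ hn) Elast; subst q.
  have u0 : forall l, uniq ((inr (T, u) : TV) :: rcons (map (emb T) l) (inl (mT T (last u l)))) ->
      uniq (u :: l).
    move=> l; rewrite /= rcons_uniq mem_rcons inE negb_or => /andP[/andP[_ h1] /andP[_ h2]].
    have {h1}h1 : emb T u \notin map (emb T) l := h1.
    by rewrite -(mem_map (@emb_inj T)) h1 -(map_inj_uniq (@emb_inj T)) h2.
  rewrite Elast in uq; have {}up := u0 _ up; have {}uq := u0 _ uq.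
  congr map.
  case: (lastP l0) pl0 Elast up => [|l0' w]; case: (lastP l1) pl1 uq => [|l1' w'] //.
  + rewrite last_rcons /= => _ /andP[+ _] _ Ew _.
    by rewrite -Ew mem_rcons inE eqxx.
  + rewrite last_rcons /= => _ _ _ -> /andP[+ _].
    by rewrite mem_rcons inE eqxx.
  + rewrite !last_rcons => pl1 uq pl0 Ew up; subst w'.
    by congr rcons; apply: (U u w); rewrite /dipath ?pl0 ?pl1.
Qed.

Lemma TA_irr : irreflexive A -> irreflexive TA.
Proof. by move=> hA [s|[T u]] //=; rewrite eqxx hA. Qed.

Lemma TA_chi : ~ k_colorable A k -> (exists u0 : V, True) -> ~ k_colorable TA k.+1.
Proof.
move=> nc [u0 _] [c Hc].
pose cls a := [set s : S | c (inl s) == a].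
have n0 : 0 < n by apply/card_gt0P; exists u0.
have [a ha] : exists a, n <= #|cls a|.
  case: (pickP (fun a => n <= #|cls a|)) => [a ha | none]; first by exists a.
  exfalso.
  have e : N.+1 = \sum_(a < k.+1) #|cls a|.
    rewrite -{1}(card_ord N.+1) -sum1_card (partition_big (fun s => c (inl s)) predT) //=.
    by apply: eq_bigr => a _; rewrite sum1dep_card.
  have : \sum_(a < k.+1) #|cls a| <= \sum_(a < k.+1) n.-1.
    apply: leq_sum => a _; have := none a; rewrite /= => /negbT; rewrite -ltnNge => h.
    by rewrite -ltnS prednK.
  rewrite -e sum_nat_const card_ord => h.
  have : k.+1 * n.-1 <= k.+1 * n by rewrite leq_mul2l leq_pred orbT.
  by move=> /(leq_trans h); rewrite ltnn.
pose T := cls a.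
have hT : forall u, c (inr (T, u)) != a.
  move=> u; have := Hc (inr (T, u)) (inl (mT T u)); rewrite /= ha eqxx /= => /(_ isT).
  have : c (inl (mT T u)) == a by have := mT_in u ha; rewrite inE.
  by move/eqP=> ->.
have [d _] : exists d : 'I_k, True.
  case: (unliftP a (c (inr (T, u0)))) => [j _|e]; first by exists j.
  by move: (hT u0); rewrite e eqxx.
apply: nc; exists (fun u => odflt d (unlift a (c (inr (T, u))))) => u v huv.
have := Hc (inr (T, u)) (inr (T, v)); rewrite /= eqxx huv => /(_ isT).
case: unliftP => [j ej|e]; last by move: (hT u); rewrite e eqxx.
case: unliftP => [j' ej'|e]; last by move: (hT v); rewrite e eqxx.
by rewrite ej ej' /=; apply: contra => /eqP ->.
Qed.

End Tutte.

Lemma D0_exists k : exists (V : finType) (A : rel V),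
  [/\ upath A, irreflexive A, ~ k_colorable A k & exists u : V, True].
Proof.
elim: k => [|k [V [A [U I C [u0 _]]]]].
  exists unit, (fun _ _ : unit => false); split.
  - by move=> x y [|z p] q /andP[].
  - by [].
  - by case=> c _; case: (c tt).
  - by exists tt.
exists (TV k V), (@TA k V A); split.
- exact: TA_upath.
- exact: TA_irr.
- by apply: TA_chi => //; exists u0.
- by exists (inl ord0).
Qed.


Lemma vlt m (i : 'I_m) : val i < m. Proof. exact: ltn_ord. Qed.

Lemma three_bool (X : eqType) (P : pred X) (g : X -> bool) :
  (forall a b, P a -> P b -> g a = g b -> a = b) ->
  forall a b c, P a -> P b -> P c -> [|| a == b, a == c | b == c].
Proof.
move=> H a b c Pa Pb Pc.
case ga: (g a); case gb: (g b); case gc: (g c);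
  try by rewrite (H a b) ?eqxx ?ga ?gb.
all: try by rewrite (H a c) ?eqxx ?orbT ?ga ?gc.
all: try by rewrite (H b c) ?eqxx ?orbT ?gb ?gc.
Qed.

Section Final.
Variables (V : finType) (A0 : rel V) (n : nat) (rk : V -> 'I_n).
Hypothesis rk_inj : injective rk.

Definition FV := (V + ('I_n.+1 + 'I_n.+1))%type.

Definition FA (x y : FV) : bool :=
  match x, y with
  | inl u, inl v => A0 u v
  | inl u, inr (inl i) => nat_of_ord i == rk u
  | inr (inl i), inr (inl j) => nat_of_ord j == (nat_of_ord i).+1
  | inr (inl i), inr (inr j) => (nat_of_ord i == n) && (nat_of_ord j == 0)
  | inr (inr i), inr (inr j) => nat_of_ord j == (nat_of_ord i).+1
  | inr (inr i), inr (inl j) => (nat_of_ord i == n) && (nat_of_ord j == 0)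
  | inr (inr i), inl v => nat_of_ord i == rk v
  | _, _ => false
  end.

Definition isorig (x : FV) := if x is inl _ then true else false.

Ltac bnds := repeat match goal with x : _ |- _ =>
  lazymatch goal with _ : is_true (nat_of_ord x < _) |- _ => fail
  | _ => have := @ltn_ord _ x; move=> ? end end.

Ltac fin := repeat match goal with
  | |- is_true (_ && _) -> _ => case/andP
  | |- is_true (_ == _) -> _ => move/eqnP
  | |- is_true true -> _ => move=> _
  | |- true = false -> _ => move=> ?; discriminate
  | |- false = true -> _ => move=> ?; discriminate
  | |- _ = _ -> _ => let h := fresh "h" in move=> h
  end; bnds;
  first [ by congr (inr (inl _)); apply: ord_inj; lia
        | by congr (inr (inr _)); apply: ord_inj; lia
        | by congr inl; apply/rk_inj/ord_inj; lia
        | exfalso; lia ].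

Lemma outA i a b : FA (inr (inl i)) a -> FA (inr (inl i)) b -> a = b.
Proof. by case: a => [v|[j|j]]; case: b => [v'|[j'|j']] //=; fin. Qed.

Lemma inB j a b : FA a (inr (inr j)) -> FA b (inr (inr j)) -> a = b.
Proof. by case: a => [v|[i|i]]; case: b => [v'|[i'|i']] //=; fin. Qed.

Lemma outB i a b c : FA (inr (inr i)) a -> FA (inr (inr i)) b -> FA (inr (inr i)) c ->
  [|| a == b, a == c | b == c].
Proof.
apply: (three_bool (P := FA (inr (inr i))) (g := isorig)) => {a b c} a b.
by case: a => [v|[j|j]]; case: b => [v'|[j'|j']] //=; fin.
Qed.

Lemma inA j a b c : FA a (inr (inl j)) -> FA b (inr (inl j)) -> FA c (inr (inl j)) ->
  [|| a == b, a == c | b == c].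
Proof.
apply: (three_bool (P := FA^~ (inr (inl j))) (g := isorig)) => {a b c} a b.
by case: a => [v|[i|i]]; case: b => [v'|[i'|i']] //=; fin.
Qed.

Definition alast : FV := inr (inl ord_max).
Definition b0 : FV := inr (inr ord0).

Lemma La l i : path FA (inr (inl i)) l -> isorig (last (inr (inl i)) l) ->
  alast \in inr (inl i) :: l.
Proof.
elim: l i => [|w l IH] i //=.
case: w => [v|[j|j]] //=.
- by case/andP=> _ hp hl; rewrite in_cons (IH j hp hl) orbT.
- case/andP=> /andP[/eqnP hi _] _ _; rewrite in_cons; apply/orP; left.
  by apply/eqP; congr (inr (inl _)); apply: ord_inj; rewrite hi.
Qed.

Lemma L1 l z : path FA z l -> isorig z -> isorig (last z l) ->
  all isorig l \/ alast \in l.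
Proof.
elim: l z => [|w l IH] z /=; first by left.
case/andP=> hzw hp oz ol.
case: w hzw hp ol => [v|[j|j]] hzw hp ol.
- by case: (IH _ hp isT ol) => h; [left | right]; rewrite /= ?h ?in_cons ?orbT.
- by right; apply: La.
- by case: z oz hzw => [u|[?|?]].
Qed.

Lemma dip_split x y p : dipath FA (inl x) (inl y) p -> all isorig p \/ alast \in p.
Proof.
case/andP=> hp _; case: (L1 hp isT _); first by rewrite last_rcons.
  by rewrite all_rcons => /andP[_ h]; left.
by rewrite mem_rcons in_cons => /orP[//|h]; right.
Qed.

Definition pr x (w : FV) := if w is inl v then v else x.

Lemma all_orig_map x p : all isorig p -> map inl (map (pr x) p) = p.
Proof. by elim: p => [|[v|w] p IH] //= /IH ->. Qed.

Lemma dip_inl x y p0 : dipath FA (inl x) (inl y) (map inl p0) -> dipath A0 x y p0.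
Proof.
rewrite /dipath -map_rcons; case/andP=> hp hu; apply/andP; split.
  by move: hp; rewrite (path_map (f := inl)).
by move: hu; rewrite -[inl x :: _]/(map inl (x :: rcons p0 y)) (map_inj_uniq inl_inj).
Qed.

Lemma orig_unique x y p q : upath A0 -> dipath FA (inl x) (inl y) p ->
  dipath FA (inl x) (inl y) q -> all isorig p -> all isorig q -> p = q.
Proof.
move=> U dp dq op oq; rewrite -(all_orig_map x op) -(all_orig_map x oq).
by congr map; apply: (U x y); apply: dip_inl; rewrite all_orig_map.
Qed.

Lemma cnt_orig x y P : upath A0 -> fam FA (inl x) (inl y) P ->
  count (all isorig) P <= 1.
Proof.
move=> U F; case: (F) => /allP al un _; apply: count_le1 => // p q pP qP.
by move=> op oq; apply: (orig_unique U (al p pP) (al q qP)).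
Qed.

Lemma new_alast x y p : dipath FA (inl x) (inl y) p -> ~~ all isorig p -> alast \in p.
Proof. by move=> d; case: (dip_split d) => ->. Qed.

Lemma cnt_new x y P : fam FA (inl x) (inl y) P ->
  count (predC (all isorig)) P <= 1.
Proof.
move=> F; case: (F) => /allP al un _; apply: count_le1 => // p q pP qP np nq.
have [//|npq] := eqVneq p q; exfalso.
have dj := fam_disj F pP qP npq.
have hp := new_alast (al p pP) np; have hq := new_alast (al q qP) nq.
by move: (disjointFr dj hp); rewrite hq.
Qed.

Lemma FA_irr : irreflexive A0 -> irreflexive FA.
Proof. by move=> hA [v|[i|i]] /=; rewrite ?hA // ltn_eqF. Qed.

Lemma chainA (i j : 'I_n.+1) : i <= j -> connect FA (inr (inl i)) (inr (inl j)).
Proof.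
move=> hij; have : nat_of_ord j = i + (j - i) by rewrite subnKC.
move: (j - i) => d; elim: d j {hij} => [|d IH] j hj.
  by have -> : j = i by apply: ord_inj; rewrite hj addn0.
have lt : i + d < n.+1 by apply: leq_trans (ltn_ord j); rewrite hj addnS.
apply: connect_trans (IH (inord (i + d)) _) (connect1 _); first by rewrite inordK.
by rewrite /= inordK // hj addnS.
Qed.

Lemma chainB (i j : 'I_n.+1) : i <= j -> connect FA (inr (inr i)) (inr (inr j)).
Proof.
move=> hij; have : nat_of_ord j = i + (j - i) by rewrite subnKC.
move: (j - i) => d; elim: d j {hij} => [|d IH] j hj.
  by have -> : j = i by apply: ord_inj; rewrite hj addn0.
have lt : i + d < n.+1 by apply: leq_trans (ltn_ord j); rewrite hj addnS.
apply: connect_trans (IH (inord (i + d)) _) (connect1 _); first by rewrite inordK.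
by rewrite /= inordK // hj addnS.
Qed.

Lemma rkA v : FA (inl v) (inr (inl (inord (rk v)))).
Proof. by rewrite /= inordK //; apply: ltnW (ltn_ord _). Qed.

Lemma rkB v : FA (inr (inr (inord (rk v)))) (inl v).
Proof. by rewrite /= inordK //; apply: ltnW (ltn_ord _). Qed.

Lemma amax_b0 : FA (inr (inl ord_max)) b0.
Proof. by rewrite /= !eqxx. Qed.

Lemma bmax_a0 : FA (inr (inr ord_max)) (inr (inl ord0)).
Proof. by rewrite /= !eqxx. Qed.

Lemma to_b0 z : connect FA z b0.
Proof.
have fromA i : connect FA (inr (inl i)) b0.
  by apply: connect_trans (@chainA i ord_max (leq_ord i)) (connect1 amax_b0).
case: z => [v|[i|i]].
- exact: connect_trans (connect1 (rkA v)) (fromA _).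
- exact: fromA i.
- apply: connect_trans (@chainB i ord_max (leq_ord i)) _.
  exact: connect_trans (connect1 bmax_a0) (fromA _).
Qed.

Lemma from_b0 z : connect FA b0 z.
Proof.
have toB i : connect FA b0 (inr (inr i)) by apply: chainB.
case: z => [v|[i|i]].
- exact: connect_trans (toB _) (connect1 (rkB v)).
- apply: connect_trans (toB ord_max) _.
  by apply: connect_trans (connect1 bmax_a0) (chainA _).
- exact: toB i.
Qed.

Lemma FA_strong : strongly_connected FA.
Proof. by move=> x y; apply: connect_trans (to_b0 x) (from_b0 y). Qed.

Lemma FA_chi k : ~ k_colorable A0 k -> chi_gt FA k.
Proof. by move=> nc [c Hc]; apply: nc; exists (fun v => c (inl v)) => u v h; apply: Hc. Qed.

Lemma FA_spindle : upath A0 -> ~ has_spindle FA 3.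
Proof.
move=> U [x [y [P [_ sz al un pw]]]].
have F : fam FA x y P by [].
clear al.
have : size P <= 2; last by rewrite sz.
case: x F => [x|[i|i]] F.
- case: y F => [y|[j|j]] F.
  + by rewrite -(count_predC (all isorig)); exact: (leq_add (cnt_orig U F) (cnt_new F)).
  + by apply: fam_in2 F _; apply: inA.
  + by apply: fam_in2 F _ => a b c ha hb _; rewrite (inB ha hb) eqxx.
- by apply: fam_out2 F _ => a b c ha hb _; rewrite (outA ha hb) eqxx.
- by apply: fam_out2 F _; apply: outB.
Qed.

Lemma FA_bispindle : upath A0 -> ~ has_bispindle FA 2 2.
Proof.
move=> U [x [y [P [Q [[_ sP sQ] [[alP alQ uP uQ] [pwP pwQ ar]]]]]]].
have FP : fam FA x y P by [].
have FQ : fam FA y x Q by [].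
clear alP alQ.
case: x FP FQ ar => [x|[i|i]] FP FQ ar.
- case: y FP FQ ar => [y|[j|j]] FP FQ ar.
  + have hP : has (predC (all isorig)) P.
      rewrite has_count; have h1 := cnt_orig U FP; have h2 := count_predC (all isorig) P.
      rewrite sP in h2; lia.
    have hQ : has (predC (all isorig)) Q.
      rewrite has_count; have h1 := cnt_orig U FQ; have h2 := count_predC (all isorig) Q.
      rewrite sQ in h2; lia.
    case/hasP: hP => p pP np; case/hasP: hQ => q qQ nq.
    case: (FP) => /allP alP _ _; case: (FQ) => /allP alQ _ _.
    have hp := new_alast (alP p pP) np; have hq := new_alast (alQ q qQ) nq.
    have := allrelP ar p q pP qQ; rewrite /int_disjoint => dj.
    by move: (disjointFr dj hp); rewrite hq.
  + by have := fam_out1 FQ (@outA j); rewrite sQ.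
  + by have := fam_in1 FP (@inB j); rewrite sP.
- by have := fam_out1 FP (@outA i); rewrite sP.
- by have := fam_in1 FQ (@inB i); rewrite sQ.
Qed.

End Final.

Theorem mainTheorem1 :
  forall k : nat,
    exists (V : finType) (A : rel V),
      [/\ loopless A, strongly_connected A, chi_gt A k,
          ~ has_spindle A 3 & ~ has_bispindle A 2 2].
Proof.
move=> k; have [V [A [U I C _]]] := D0_exists k.
exists (V + ('I_#|V|.+1 + 'I_#|V|.+1))%type, (FA A (@enum_rank V)); split.
- exact: FA_irr.
- exact: FA_strong.
- exact: FA_chi.
- exact: FA_spindle (@enum_rank_inj V) U.
- exact: FA_bispindle U.
Qed.
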